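(* $\chi=\mathbb E[|X(-J,-1)|]$ satisfies $1\le\chi\le2$. Moreover, $\chi=2$ if and only if $\lim_{n\to\infty}\mathbb E[\mathcal C(-n,-1)\mathbbm 1_{J>n}]=0$.
   Context: Fix an integer $k\ge 2$ and $p\in[0,1]$. Let $\Theta=\{b_1,\dots,b_k,o_1,\dots,o_k,F\}$, where $b_i$ is a burger of type $i$, $o_i$ is an order of type $i$, and $F$ is a flexible order. Words in $\Theta$ are considered modulo the relations $b_io_i=b_iF=\varnothing$ and $b_io_j=o_jb_i$ for $i\ne j$; $\overline W$ denotes the reduced form of $W$ and $|W|$ its length. In the reduction, each $o_i$ consumes the most recent not-yet-consumed $b_i$ to its left, each $F$ consumes the most recent not-yet-consumed burger of any type to its left, and the reduced word lists the unconsumed orders followed by the unconsumed burgers. Let $(X(n))_{n\in\mathbb Z}$ be i.i.d. with $\mathbb P(X(n)=b_i)=\frac1{2k}$, $\mathbb P(X(n)=o_i)=\frac{1-p}{2k}$ and $\mathbb P(X(n)=F)=\frac p2$. For $m\le n$, set $X(m,n)=\overline{X(m)\cdots X(n)}$. For a word $W$, $\mathcal C(W)$ is the number of burgers minus the number of orders in $W$, and $\mathcal C(m,n)=\mathcal C(X(m,n))$. Let $J$ be the smallest positive integer such that $X(-J,-1)$ contains exactly one burger. *)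

(* Defs.v *)
From Stdlib Require Import Reals List Arith Bool.
Import ListNotations.
Open Scope R_scope.

(** Symbols of Theta: burger b_i, order o_i (types i < k), flexible order F. *)
Inductive sym : Type := Bur (i : nat) | Ord (i : nat) | Flex.

Definition alph (k : nat) : list sym :=
  map Bur (seq 0 k) ++ map Ord (seq 0 k) ++ [Flex].

Fixpoint words (k n : nat) : list (list sym) :=
  match n with
  | O => [[]]
  | S m => flat_map (fun x => map (cons x) (words k m)) (alph k)
  end.

(** Remove the most recent burger of type i from the stack
    (stack = list of burger types, most recent first). *)
Fixpoint take_bur (i : nat) (st : list nat) : option (list nat) :=
  match st with
  | [] => None
  | j :: st' => if Nat.eqb i j then Some st'
               else match take_bur i st' with
                    | Some s => Some (j :: s)
                    | None => None
                    end
  end.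

(** One reduction step: state = (unconsumed orders in order, burger stack). *)
Definition step (s : list sym * list nat) (x : sym) : list sym * list nat :=
  let (ords, st) := s in
  match x with
  | Bur i => (ords, i :: st)
  | Ord i => match take_bur i st with
             | Some st' => (ords, st')
             | None => (ords ++ [Ord i], st)
             end
  | Flex => match st with
            | _ :: st' => (ords, st')
            | [] => (ords ++ [Flex], st)
            end
  end.

Definition reduce (w : list sym) : list sym :=
  let (ords, st) := fold_left step w ([], []) in ords ++ map Bur (rev st).

Definition is_bur (x : sym) : bool := match x with Bur _ => true | _ => false end.

Definition nburgers (w : list sym) : nat := length (filter is_bur w).
Definition norders (w : list sym) : nat := length (filter (fun x => negb (is_bur x)) w).

Definition Cw (w : list sym) : R := INR (nburgers w) - INR (norders w).

Definition prob (k : nat) (p : R) (x : sym) : R :=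
  match x with
  | Bur _ => 1 / (2 * INR k)
  | Ord _ => (1 - p) / (2 * INR k)
  | Flex => p / 2
  end.

Definition wprob (k : nat) (p : R) (w : list sym) : R :=
  fold_right (fun x r => prob k p x * r) 1 w.

Definition sumR (l : list R) : R := fold_right Rplus 0 l.

(** The word w = [X(-n); ...; X(-1)]; its suffix of length i is
    [X(-i); ...; X(-1)], whose reduction is X(-i,-1). *)
Definition suffix (i : nat) (w : list sym) : list sym := skipn (length w - i) w.

Definition one_burger (w : list sym) : bool := Nat.eqb (nburgers (reduce w)) 1.

Definition J_eq (j : nat) (w : list sym) : bool :=
  one_burger w && forallb (fun i => negb (one_burger (suffix i w))) (seq 1 (j - 1)).

Definition J_gt (n : nat) (w : list sym) : bool :=
  forallb (fun i => negb (one_burger (suffix i w))) (seq 1 n).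

Definition chi_term (k : nat) (p : R) (j : nat) : R :=
  sumR (map (fun w => if J_eq j w then wprob k p w * INR (length (reduce w)) else 0)
            (words k j)).

Definition E_C_Jgt (k : nat) (p : R) (n : nat) : R :=
  sumR (map (fun w => if J_gt n w then wprob k p w * Cw (reduce w) else 0)
            (words k n)).

(* Main.v *)
Require Import Defs.
From Stdlib Require Import Reals Lra Lia List Arith Bool.
Import ListNotations.
Open Scope R_scope.

Lemma sumR_app l1 l2 : sumR (l1 ++ l2) = sumR l1 + sumR l2.
Proof. induction l1; simpl; [lra| rewrite IHl1; lra]. Qed.

Lemma sumR_map_plus {A} (f g : A -> R) l :
  sumR (map (fun x => f x + g x) l) = sumR (map f l) + sumR (map g l).
Proof. induction l; simpl; [lra| rewrite IHl; lra]. Qed.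

Lemma sumR_map_scal {A} c (f : A -> R) l :
  sumR (map (fun x => c * f x) l) = c * sumR (map f l).
Proof. induction l; simpl; [lra| rewrite IHl; lra]. Qed.

Lemma sumR_map_ext {A} (f g : A -> R) l :
  (forall x, In x l -> f x = g x) -> sumR (map f l) = sumR (map g l).
Proof. induction l; simpl; intros H; [lra|]. rewrite H, IHl; auto. Qed.

Lemma sumR_map_le {A} (f g : A -> R) l :
  (forall x, In x l -> f x <= g x) -> sumR (map f l) <= sumR (map g l).
Proof. induction l; simpl; intros H; [lra|].
  apply Rplus_le_compat; auto. Qed.

Lemma sumR_map_const {A} c (l : list A) :
  sumR (map (fun _ => c) l) = INR (length l) * c.
Proof. induction l; simpl length; [simpl; lra|]. rewrite S_INR. simpl. rewrite IHl. lra. Qed.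

Lemma sumR_flat_map {A B} (g : B -> R) (h : A -> list B) l :
  sumR (map g (flat_map h l)) = sumR (map (fun x => sumR (map g (h x))) l).
Proof. induction l; simpl; auto. rewrite map_app, sumR_app, IHl. auto. Qed.

Lemma sumR_swap {A B} (f : A -> B -> R) la lb :
  sumR (map (fun a => sumR (map (fun b => f a b) lb)) la) =
  sumR (map (fun b => sumR (map (fun a => f a b) la)) lb).
Proof.
  induction la; simpl.
  - rewrite (sumR_map_const 0). lra.
  - rewrite IHla. rewrite <- sumR_map_plus. auto.
Qed.

Definition E k p n (f : list sym -> R) :=
  sumR (map (fun w => wprob k p w * f w) (words k n)).

Lemma E_S_left k p n f :
  E k p (S n) f = sumR (map (fun x => prob k p x * E k p n (fun w => f (x :: w))) (alph k)).
Proof.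
  unfold E. simpl words. rewrite sumR_flat_map. apply sumR_map_ext; intros x _.
  rewrite map_map, <- sumR_map_scal. apply sumR_map_ext; intros w _.
  simpl. ring.
Qed.

Lemma E_S_right k p n f :
  E k p (S n) f = sumR (map (fun x => prob k p x * E k p n (fun w => f (w ++ [x]))) (alph k)).
Proof.
  revert f; induction n; intros f.
  - rewrite E_S_left. apply sumR_map_ext; intros x _. unfold E; simpl. ring.
  - rewrite E_S_left.
    transitivity (sumR (map (fun y => sumR (map (fun x => prob k p x * (prob k p y *
        E k p n (fun w => f ((y :: w) ++ [x])))) (alph k))) (alph k))).
    { apply sumR_map_ext; intros y _. rewrite IHn. rewrite <- sumR_map_scal.
      apply sumR_map_ext; intros x _. simpl. ring. }
    rewrite sumR_swap. apply sumR_map_ext; intros x _.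
    rewrite sumR_map_scal. f_equal. rewrite E_S_left. auto.
Qed.

Lemma INR_k_pos k : (2 <= k)%nat -> 0 < INR k.
Proof. intros. apply lt_0_INR. lia. Qed.

Lemma prob_nonneg k p x : (2 <= k)%nat -> 0 <= p <= 1 -> 0 <= prob k p x.
Proof.
  intros Hk Hp. pose proof (INR_k_pos k Hk). destruct x; simpl.
  - apply Rmult_le_pos; [lra|]. left; apply Rinv_0_lt_compat; lra.
  - apply Rmult_le_pos; [lra|]. left; apply Rinv_0_lt_compat; lra.
  - lra.
Qed.

Lemma wprob_nonneg k p w : (2 <= k)%nat -> 0 <= p <= 1 -> 0 <= wprob k p w.
Proof.
  intros Hk Hp. induction w; simpl; [lra|].
  apply Rmult_le_pos; auto. apply prob_nonneg; auto.
Qed.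

Lemma words_length k n w : In w (words k n) -> length w = n.
Proof.
  revert w; induction n; simpl; intros w H.
  - destruct H as [<-|[]]; auto.
  - apply in_flat_map in H. destruct H as [x [_ H]]. apply in_map_iff in H.
    destruct H as [w' [<- H]]. simpl. f_equal. auto.
Qed.

Lemma E_ext k p n f g : (forall w, In w (words k n) -> f w = g w) -> E k p n f = E k p n g.
Proof. intros H. unfold E. apply sumR_map_ext. intros w Hw. rewrite H; auto. Qed.

Lemma E_le k p n f g : (2 <= k)%nat -> 0 <= p <= 1 ->
  (forall w, In w (words k n) -> f w <= g w) -> E k p n f <= E k p n g.
Proof. intros Hk Hp H. unfold E. apply sumR_map_le. intros w Hw.
  apply Rmult_le_compat_l; auto. apply wprob_nonneg; auto. Qed.

Lemma E_plus k p n f g : E k p n (fun w => f w + g w) = E k p n f + E k p n g.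
Proof. unfold E. rewrite <- sumR_map_plus. apply sumR_map_ext; intros; ring. Qed.

Lemma E_scal k p n c f : E k p n (fun w => c * f w) = c * E k p n f.
Proof. unfold E. rewrite <- sumR_map_scal. apply sumR_map_ext; intros; ring. Qed.

Lemma alph_sum k p F a b : (2 <= k)%nat ->
  (forall i, F (Bur i) = a) -> (forall i, F (Ord i) = b) -> F Flex = b ->
  sumR (map (fun x => prob k p x * F x) (alph k)) = (a + b) / 2.
Proof.
  intros Hk Ha Hb Hf. pose proof (INR_k_pos k Hk).
  unfold alph. rewrite !map_app, !map_map, !sumR_app.
  rewrite (sumR_map_ext (fun x => prob k p (Bur x) * F (Bur x)) (fun _ => 1 / (2 * INR k) * a)) by (intros; simpl; rewrite ?Ha; auto).
  rewrite (sumR_map_ext (fun x => prob k p (Ord x) * F (Ord x)) (fun _ => (1 - p) / (2 * INR k) * b)) by (intros; simpl; rewrite ?Hb; auto).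
  rewrite !sumR_map_const, length_seq. simpl. rewrite Hf. field. lra.
Qed.

Lemma E_one k p n : (2 <= k)%nat -> E k p n (fun _ => 1) = 1.
Proof.
  intros Hk. induction n.
  - unfold E; simpl; ring.
  - rewrite E_S_left. rewrite (alph_sum k p _ 1 1); auto; try lra;
    intros; rewrite IHn; ring.
Qed.

Lemma E_const k p n c : (2 <= k)%nat -> E k p n (fun _ => c) = c.
Proof.
  intros Hk. rewrite (E_ext _ _ _ _ (fun _ => c * 1)) by (intros; ring).
  rewrite E_scal, E_one; auto; ring.
Qed.

Definition sstep (st : list nat) (x : sym) : list nat := snd (step ([], st) x).

Lemma step_eq o st x : step (o, st) x = (o ++ fst (step ([], st) x), sstep st x).
Proof. unfold sstep; destruct x; simpl; try destruct (take_bur i st); try destruct st;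
  simpl; rewrite ?app_nil_r; auto. Qed.

Lemma fold_snd w : forall o st, snd (fold_left step w (o, st)) = fold_left sstep w st.
Proof. induction w; intros; cbn [fold_left]; auto. rewrite step_eq. apply IHw. Qed.

Definition nonbur (l : list sym) := forallb (fun x => negb (is_bur x)) l = true.

Lemma fold_fst_nonbur w : forall o st, nonbur o -> nonbur (fst (fold_left step w (o, st))).
Proof.
  induction w; cbn [fold_left]; auto. intros o st H. rewrite step_eq. apply IHw.
  unfold nonbur in *; rewrite forallb_app, H; simpl.
  destruct a; simpl; [auto| destruct (take_bur i st); simpl; auto | destruct st; simpl; auto].
Qed.

Lemma take_bur_len i st s : take_bur i st = Some s -> length st = S (length s).
Proof.
  revert s; induction st; simpl; intros s H; try discriminate.
  destruct (Nat.eqb i a); [inversion H; auto|].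
  destruct (take_bur i st) eqn:E; inversion H; subst; simpl; auto.
Qed.

Lemma step_len o st x : let r := step (o,st) x in
  (length (snd r) + length o + (if is_bur x then 0 else 1) =
   length (fst r) + length st + (if is_bur x then 1 else 0))%nat.
Proof.
  destruct x; simpl.
  - lia.
  - destruct (take_bur i st) eqn:E; simpl. apply take_bur_len in E; lia.
    rewrite length_app; simpl; lia.
  - destruct st; simpl; rewrite ?length_app; simpl; lia.
Qed.

Lemma nb_cons x w : nburgers (x :: w) = ((if is_bur x then 1 else 0) + nburgers w)%nat.
Proof. unfold nburgers; destruct x; simpl; auto. Qed.
Lemma no_cons x w : norders (x :: w) = ((if is_bur x then 0 else 1) + norders w)%nat.
Proof. unfold norders; destruct x; simpl; auto. Qed.

Lemma fold_inv w : forall o st, let r := fold_left step w (o, st) in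
  (length (snd r) + length o + norders w = length (fst r) + length st + nburgers w)%nat.
Proof.
  induction w; intros o st; cbn [fold_left].
  - unfold norders, nburgers; simpl; lia.
  - pose proof (step_len o st a) as H. destruct (step (o, st) a) as [o' st'] eqn:Hs.
    specialize (IHw o' st'). cbn [fst snd] in *. rewrite nb_cons, no_cons. lia.
Qed.

Lemma filter_nonbur l : nonbur l -> filter is_bur l = [] /\ filter (fun x => negb (is_bur x)) l = l.
Proof.
  induction l; simpl; auto. unfold nonbur; simpl. intros H.
  apply andb_true_iff in H. destruct H as [H1 H2]. destruct (IHl H2) as [-> ->].
  destruct (is_bur a); simpl in *; auto; discriminate.
Qed.

Lemma filter_bur l : filter is_bur (map Bur l) = map Bur l /\
  filter (fun x => negb (is_bur x)) (map Bur l) = [].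
Proof. induction l; simpl; auto. destruct IHl as [-> ->]; auto. Qed.

Lemma reduce_facts w : let r := fold_left step w ([],[]) in
  nburgers (reduce w) = length (snd r) /\ norders (reduce w) = length (fst r) /\
  length (reduce w) = (length (fst r) + length (snd r))%nat.
Proof.
  pose proof (fold_fst_nonbur w [] [] eq_refl) as Hn.
  unfold reduce. destruct (fold_left step w ([],[])) as [o st]. simpl in *.
  unfold nburgers, norders. rewrite !filter_app.
  destruct (filter_nonbur o Hn) as [-> ->]. destruct (filter_bur (rev st)) as [-> ->].
  simpl. rewrite app_nil_r, !length_app, !length_map, !length_rev. auto.
Qed.

Lemma Cw_reduce w : Cw (reduce w) = Cw w.
Proof.
  pose proof (reduce_facts w) as [H1 [H2 _]]. pose proof (fold_inv w [] []) as H.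
  simpl in *. unfold Cw. rewrite H1, H2.
  apply (f_equal INR) in H. rewrite !plus_INR in H. simpl in H. lra.
Qed.

Definition Rins (A B : list nat) := B = A \/ exists A1 A2 e, A = A1 ++ A2 /\ B = A1 ++ e :: A2.

Lemma take_bur_app i l1 l2 : take_bur i (l1 ++ l2) =
  match take_bur i l1 with Some s => Some (s ++ l2)
  | None => match take_bur i l2 with Some s => Some (l1 ++ s) | None => None end end.
Proof.
  induction l1; simpl. destruct take_bur; auto. destruct (Nat.eqb i a); auto.
  rewrite IHl1. destruct (take_bur i l1); auto. destruct (take_bur i l2); auto.
Qed.

Lemma take_bur_split i l s : take_bur i l = Some s -> exists l1 l2, l = l1 ++ i :: l2 /\ s = l1 ++ l2.
Proof.
  revert s; induction l; simpl; intros s H; try discriminate.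
  destruct (Nat.eqb i a) eqn:E.
  - apply Nat.eqb_eq in E; subst. injection H as <-. exists [], l; auto.
  - destruct take_bur eqn:E2; inversion H; subst.
    destruct (IHl l0 eq_refl) as [l1 [l2 [-> ->]]]. exists (a::l1), l2; auto.
Qed.

Lemma sstep_Rins A B x : Rins A B -> Rins (sstep A x) (sstep B x).
Proof.
  intros [->| [A1 [A2 [e [-> ->]]]]]; [left; auto|].
  destruct x; unfold sstep; simpl.
  - right. exists (i :: A1), A2, e. auto.
  - rewrite !take_bur_app. destruct (take_bur i A1) eqn:H1.
    + simpl. right; exists l, A2, e; auto.
    + simpl. destruct (Nat.eqb i e) eqn:He.
      * destruct (take_bur i A2) eqn:H2; simpl.
        -- apply take_bur_split in H2; destruct H2 as [l1 [l2 [-> ->]]].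
           right. exists (A1 ++ l1), l2, i. rewrite <- !app_assoc. auto.
        -- left; auto.
      * destruct (take_bur i A2) eqn:H2; simpl.
        -- right; exists A1, l, e; auto.
        -- right; exists A1, A2, e; auto.
  - destruct A1 as [|y A1]; simpl.
    + destruct A2 as [|y A2]; simpl. left; auto. right; exists [], A2, y; auto.
    + right; exists A1, A2, e; auto.
Qed.

Lemma Rins_len A B : Rins A B -> (length B <= S (length A))%nat.
Proof. intros [->|[A1 [A2 [e [-> ->]]]]]; rewrite ?length_app; simpl; lia. Qed.

Lemma fold_Rins w : forall A B, Rins A B -> Rins (fold_left sstep w A) (fold_left sstep w B).
Proof. induction w; simpl; auto. intros. apply IHw. apply sstep_Rins; auto. Qed.

Lemma nb_reduce w : nburgers (reduce w) = length (fold_left sstep w []).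
Proof. destruct (reduce_facts w) as [H _]. rewrite H, fold_snd. auto. Qed.

Lemma nb_reduce_cons x w : (nburgers (reduce (x :: w)) <= S (nburgers (reduce w)))%nat.
Proof.
  rewrite !nb_reduce. simpl. destruct x; unfold sstep; simpl; try lia.
  apply Rins_len, fold_Rins. right. exists [], [], i. auto.
Qed.

Lemma len_ob w : one_burger w = true -> INR (length (reduce w)) = 2 - Cw w.
Proof.
  intros H. rewrite <- Cw_reduce. unfold one_burger in H. apply Nat.eqb_eq in H.
  destruct (reduce_facts w) as [H1 [H2 H3]]. unfold Cw. rewrite H3, H2, H. rewrite <- H1, H.
  rewrite plus_INR. simpl. lra.
Qed.

Lemma len_reduce_ge w : one_burger w = true -> 1 <= INR (length (reduce w)).
Proof.
  intros H. unfold one_burger in H. apply Nat.eqb_eq in H.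
  destruct (reduce_facts w) as [H1 [H2 H3]]. rewrite H3. apply (le_INR 1). lia.
Qed.

Lemma Cw_app l1 l2 : Cw (l1 ++ l2) = Cw l1 + Cw l2.
Proof. unfold Cw, nburgers, norders. rewrite !filter_app, !length_app, !plus_INR. ring. Qed.

Definition cx x := if is_bur x then 1 else -1.
Lemma Cw_one x : Cw [x] = cx x.
Proof. destruct x; unfold Cw, cx; simpl; lra. Qed.

Lemma suffix_cons i x w : (i <= length w)%nat -> suffix i (x :: w) = suffix i w.
Proof. intros H. unfold suffix. simpl length.
  replace (S (length w) - i)%nat with (S (length w - i)) by lia. simpl. auto. Qed.

Lemma suffix_full w : suffix (length w) w = w.
Proof. unfold suffix. rewrite Nat.sub_diag. auto. Qed.

Lemma suffix_zero w : suffix 0 w = [].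
Proof. unfold suffix. rewrite Nat.sub_0_r. apply skipn_all. Qed.

Lemma suffix_S i w : (S i <= length w)%nat -> exists x, suffix (S i) w = x :: suffix i w.
Proof.
  induction w as [|y w IH]; simpl; intros H; [lia|].
  destruct (Nat.eq_dec (S i) (S (length w))) as [He|He].
  - exists y. unfold suffix. simpl length. rewrite He, Nat.sub_diag.
    replace (S (length w) - i)%nat with 1%nat by lia. simpl. auto.
  - destruct (IH ltac:(lia)) as [x Hx]. exists x.
    rewrite !suffix_cons by lia. auto.
Qed.

Lemma suffix_app i w x : (i <= length w)%nat -> suffix (S i) (w ++ [x]) = suffix i w ++ [x].
Proof.
  intros H. unfold suffix. rewrite length_app. simpl.
  replace (length w + 1 - S i)%nat with (length w - i)%nat by lia.
  rewrite skipn_app. replace (length w - i - length w)%nat with 0%nat by lia. auto.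
Qed.

Lemma forallb_ext_in {A} (f g : A -> bool) l : (forall x, In x l -> f x = g x) -> forallb f l = forallb g l.
Proof. induction l; simpl; intros H; auto. rewrite H, IHl; auto. Qed.

Lemma J_gt_S n x w : length w = n -> J_gt (S n) (x :: w) = J_gt n w && negb (one_burger (x :: w)).
Proof.
  intros Hl. unfold J_gt. rewrite seq_S, forallb_app.
  replace (1 + n)%nat with (S (length w)) by lia.
  assert (Hs : suffix (S (length w)) (x :: w) = x :: w) by apply (suffix_full (x :: w)).
  simpl forallb at 2. rewrite Hs, andb_true_r. f_equal. apply forallb_ext_in. intros i Hi.
  apply in_seq in Hi. rewrite suffix_cons by lia. auto.
Qed.

Lemma J_eq_S n x w : length w = n -> J_eq (S n) (x :: w) = one_burger (x :: w) && J_gt n w.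
Proof.
  intros Hl. unfold J_eq, J_gt. simpl (S n - 1)%nat. rewrite Nat.sub_0_r. f_equal.
  apply forallb_ext_in. intros i Hi. apply in_seq in Hi. rewrite suffix_cons by lia. auto.
Qed.

Lemma part n x w a : length w = n ->
  (if J_gt (S n) (x :: w) then a else 0) + (if J_eq (S n) (x :: w) then a else 0) =
  if J_gt n w then a else 0.
Proof.
  intros Hl. rewrite J_gt_S, J_eq_S by auto.
  destruct (J_gt n w), (one_burger (x :: w)); simpl; ring.
Qed.

Lemma J_gt_nb n w : J_gt n w = true -> forall i, (i <= n)%nat -> (i <= length w)%nat ->
  nburgers (reduce (suffix i w)) = 0%nat.
Proof.
  intros HJ. induction i; intros H1 H2.
  - rewrite suffix_zero. reflexivity.
  - destruct (suffix_S i w H2) as [x Hx]. pose proof (nb_reduce_cons x (suffix i w)) as Hc.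
    rewrite <- Hx in Hc. rewrite IHi in Hc by lia.
    unfold J_gt in HJ. rewrite forallb_forall in HJ.
    assert (Hin : In (S i) (seq 1 n)) by (apply in_seq; lia).
    specialize (HJ _ Hin). unfold one_burger in HJ. apply negb_true_iff in HJ.
    apply Nat.eqb_neq in HJ. lia.
Qed.

Lemma J_gt_C n w : length w = n -> J_gt n w = true -> forall i, (i <= n)%nat -> Cw (suffix i w) <= 0.
Proof.
  intros Hl HJ i Hi. rewrite <- Cw_reduce. unfold Cw.
  rewrite (J_gt_nb n w HJ i Hi ltac:(lia)). simpl. pose proof (pos_INR (norders (reduce (suffix i w)))). lra.
Qed.

Definition Qf k p n := E k p n (fun w => if J_gt n w then 1 else 0).
Definition Gf k p n := E k p n (fun w => if J_gt n w then Cw w else 0).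
Definition PJ k p n := E k p n (fun w => if J_eq n w then 1 else 0).
Definition CJ k p n := E k p n (fun w => if J_eq n w then Cw w else 0).

Lemma E_C_Jgt_eq k p n : E_C_Jgt k p n = Gf k p n.
Proof. unfold E_C_Jgt, Gf, E. apply sumR_map_ext; intros w _.
  destruct (J_gt n w); [rewrite Cw_reduce|]; ring. Qed.

Lemma J_eq_ob n w : J_eq n w = true -> one_burger w = true.
Proof. unfold J_eq. intros H. apply andb_prop in H. tauto. Qed.

Lemma chi_term_E k p n : chi_term k p n = E k p n (fun w => if J_eq n w then INR (length (reduce w)) else 0).
Proof. unfold chi_term, E. apply sumR_map_ext; intros w _. destruct (J_eq n w); ring. Qed.

Lemma chi_term_eq k p n : chi_term k p n = 2 * PJ k p n - CJ k p n.
Proof.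
  rewrite chi_term_E. unfold PJ, CJ.
  rewrite (E_ext _ _ _ _ (fun w => 2 * (if J_eq n w then 1 else 0) + (-1) * (if J_eq n w then Cw w else 0))).
  - rewrite E_plus, !E_scal. ring.
  - intros w _. destruct (J_eq n w) eqn:H; [|ring]. rewrite len_ob by (apply J_eq_ob with n; auto). ring.
Qed.

Lemma split_gen k p n f :
  E k p (S n) (fun v => if J_gt (S n) v then f v else 0) + E k p (S n) (fun v => if J_eq (S n) v then f v else 0) =
  sumR (map (fun x => prob k p x * E k p n (fun w => if J_gt n w then f (x :: w) else 0)) (alph k)).
Proof.
  rewrite <- E_plus, E_S_left. apply sumR_map_ext; intros x _. f_equal.
  apply E_ext; intros w Hw. apply part. apply words_length with k; auto.
Qed.

Lemma Q_rec k p n : (2 <= k)%nat -> Qf k p (S n) + PJ k p (S n) = Qf k p n.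
Proof.
  intros Hk. unfold Qf, PJ. rewrite (split_gen k p n (fun _ => 1)).
  rewrite (alph_sum k p _ (Qf k p n) (Qf k p n)); auto. unfold Qf; lra.
Qed.

Lemma G_rec k p n : (2 <= k)%nat -> Gf k p (S n) + CJ k p (S n) = Gf k p n.
Proof.
  intros Hk. unfold Gf, CJ. rewrite (split_gen k p n Cw).
  assert (H : forall x, E k p n (fun w => if J_gt n w then Cw (x :: w) else 0) = cx x * Qf k p n + Gf k p n).
  { intros x. unfold Qf, Gf. rewrite <- E_scal, <- E_plus. apply E_ext; intros w _.
    change (x :: w) with ([x] ++ w). rewrite Cw_app, Cw_one. destruct (J_gt n w); ring. }
  rewrite (alph_sum k p _ (1 * Qf k p n + Gf k p n) (-1 * Qf k p n + Gf k p n)); auto.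
  unfold Gf, Qf. lra.
Qed.

Lemma E_zero_len k p f : E k p 0 f = f [].
Proof. unfold E; simpl. ring. Qed.

Lemma Q0 k p : Qf k p 0 = 1.
Proof. unfold Qf. rewrite E_zero_len. reflexivity. Qed.
Lemma G0 k p : Gf k p 0 = 0.
Proof. unfold Gf. rewrite E_zero_len. simpl. unfold Cw; simpl. ring. Qed.
Lemma chi0 k p : chi_term k p 0 = 0.
Proof. rewrite chi_term_E, E_zero_len. reflexivity. Qed.
Lemma PJ0 k p : PJ k p 0 = 0.
Proof. unfold PJ. rewrite E_zero_len. reflexivity. Qed.

Lemma partial_chi k p N : (2 <= k)%nat -> sum_f_R0 (chi_term k p) N = 2 * (1 - Qf k p N) + Gf k p N.
Proof.
  intros Hk. induction N; simpl.
  - rewrite chi0, Q0, G0. ring.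
  - rewrite IHN, chi_term_eq. pose proof (Q_rec k p N Hk). pose proof (G_rec k p N Hk). lra.
Qed.

Lemma partial_PJ k p N : (2 <= k)%nat -> sum_f_R0 (PJ k p) N = 1 - Qf k p N.
Proof.
  intros Hk. induction N; simpl.
  - rewrite PJ0, Q0. ring.
  - rewrite IHN. pose proof (Q_rec k p N Hk). lra.
Qed.

Lemma chi_ge_PJ k p n : (2 <= k)%nat -> 0 <= p <= 1 -> PJ k p n <= chi_term k p n.
Proof.
  intros Hk Hp. rewrite chi_term_E. unfold PJ. apply E_le; auto. intros w _.
  destruct (J_eq n w) eqn:H; [|lra]. apply len_reduce_ge. apply J_eq_ob with n; auto.
Qed.

Lemma PJ_nonneg k p n : (2 <= k)%nat -> 0 <= p <= 1 -> 0 <= PJ k p n.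
Proof.
  intros Hk Hp. rewrite <- (E_const k p n 0 Hk). unfold PJ. apply E_le; auto.
  intros w _; destruct (J_eq n w); lra.
Qed.

Lemma Q_nonneg k p n : (2 <= k)%nat -> 0 <= p <= 1 -> 0 <= Qf k p n.
Proof.
  intros Hk Hp. rewrite <- (E_const k p n 0 Hk). unfold Qf. apply E_le; auto.
  intros w _; destruct (J_gt n w); lra.
Qed.

Lemma G_nonpos k p n : (2 <= k)%nat -> 0 <= p <= 1 -> Gf k p n <= 0.
Proof.
  intros Hk Hp. rewrite <- (E_const k p n 0 Hk). unfold Gf. apply E_le; auto.
  intros w Hw. apply words_length in Hw. destruct (J_gt n w) eqn:HJ; [|lra].
  rewrite <- (suffix_full w) at 1. rewrite Hw. apply J_gt_C with n; auto.
Qed.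

Definition leb0 (x : R) : bool := if Rle_dec x 0 then true else false.
Definition stays n h w := forallb (fun i => leb0 (h + Cw (suffix i w))) (seq 0 (S n)).
Definition V k p n h := E k p n (fun w => if stays n h w then 1 else 0).

Lemma forallb_map_S (f : nat -> bool) l : forallb f (map S l) = forallb (fun i => f (S i)) l.
Proof. induction l; simpl; auto. rewrite IHl; auto. Qed.

Lemma forallb_cons {A} (f : A -> bool) a l : forallb f (a :: l) = f a && forallb f l.
Proof. reflexivity. Qed.

Lemma Cw_nil : Cw [] = 0.
Proof. unfold Cw; simpl. ring. Qed.

Lemma stays_app n h w x : length w = n -> stays (S n) h (w ++ [x]) = leb0 h && stays n (h + cx x) w.
Proof.
  intros Hl. unfold stays.
  replace (seq 0 (S (S n))) with (0%nat :: map S (seq 0 (S n))) by (simpl; rewrite seq_shift; auto).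
  rewrite forallb_cons, forallb_map_S.
  rewrite suffix_zero, Cw_nil, Rplus_0_r. f_equal.
  apply forallb_ext_in. intros i Hi.
  apply in_seq in Hi. rewrite suffix_app by lia. rewrite Cw_app, Cw_one.
  f_equal. ring.
Qed.

Lemma V0 k p h : V k p 0 h = if leb0 h then 1 else 0.
Proof. unfold V. rewrite E_zero_len. unfold stays. simpl. rewrite suffix_zero, Cw_nil, Rplus_0_r.
  destruct (leb0 h); auto. Qed.

Lemma V_rec k p n h : (2 <= k)%nat -> V k p (S n) h = if leb0 h then (V k p n (h + 1) + V k p n (h + -1)) / 2 else 0.
Proof.
  intros Hk. unfold V at 1. rewrite E_S_right.
  assert (H : forall x, E k p n (fun w => if stays (S n) h (w ++ [x]) then 1 else 0) =
                        if leb0 h then V k p n (h + cx x) else 0).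
  { intros x. unfold V. destruct (leb0 h) eqn:Hh.
    - apply E_ext. intros w Hw. rewrite stays_app by (apply words_length with k; auto). rewrite Hh. auto.
    - transitivity (E k p n (fun _ => 0)); [|apply E_const; auto]. apply E_ext. intros w Hw.
      rewrite stays_app by (apply words_length with k; auto). rewrite Hh. auto. }
  destruct (leb0 h) eqn:Hh.
  - apply (alph_sum k p); auto.
  - rewrite (alph_sum k p _ 0 0); auto. lra.
Qed.

Lemma V_pos k p n h : (2 <= k)%nat -> 0 < h -> V k p n h = 0.
Proof.
  intros Hk Hh. assert (leb0 h = false) by (unfold leb0; destruct (Rle_dec h 0); auto; lra).
  destruct n; [rewrite V0| rewrite V_rec]; auto; rewrite H; auto.
Qed.

Lemma V_bounds k p n h : (2 <= k)%nat -> 0 <= p <= 1 -> 0 <= V k p n h <= 1.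
Proof.
  intros Hk Hp. split.
  - rewrite <- (E_const k p n 0 Hk) at 1. apply E_le; auto. intros w _; destruct (stays n h w); lra.
  - apply Rle_trans with (E k p n (fun _ => 1)); [|rewrite E_const; auto; lra].
    apply E_le; auto. intros w _; destruct (stays n h w); lra.
Qed.

Lemma V_decr k p n : (2 <= k)%nat -> 0 <= p <= 1 -> forall h, V k p (S n) h <= V k p n h.
Proof.
  intros Hk Hp. induction n; intros h.
  - rewrite V_rec, (V0 k p h) by auto. destruct (leb0 h); [|lra].
    pose proof (V_bounds k p 0 (h+1) Hk Hp). pose proof (V_bounds k p 0 (h + -1) Hk Hp). lra.
  - rewrite (V_rec k p (S n) h), (V_rec k p n h) by auto. destruct (leb0 h); [|lra].
    pose proof (IHn (h+1)). pose proof (IHn (h + -1)). lra.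
Qed.

Lemma Q_le_V k p n : (2 <= k)%nat -> 0 <= p <= 1 -> Qf k p n <= V k p n 0.
Proof.
  intros Hk Hp. unfold Qf, V. apply E_le; auto. intros w Hw. apply words_length in Hw.
  destruct (J_gt n w) eqn:HJ; [|destruct (stays n 0 w); lra].
  assert (stays n 0 w = true) as ->; [|lra].
  unfold stays. apply forallb_forall. intros i Hi. apply in_seq in Hi.
  unfold leb0. destruct (Rle_dec (0 + Cw (suffix i w)) 0); auto.
  exfalso. apply n0. pose proof (J_gt_C n w Hw HJ i ltac:(lia)). lra.
Qed.

Lemma cv_shift u l : Un_cv u l -> Un_cv (fun n => u (S n)) l.
Proof. intros H eps He. destruct (H eps He) as [N HN]. exists N. intros n Hn. apply HN. lia. Qed.

Lemma cv_const c : Un_cv (fun _ => c) c.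
Proof. intros eps He. exists 0%nat. intros. unfold R_dist. rewrite Rminus_diag, Rabs_R0. lra. Qed.

Lemma cv_ext u v l : (forall n, u n = v n) -> Un_cv u l -> Un_cv v l.
Proof. intros E H eps He. destruct (H eps He) as [N HN]. exists N. intros n Hn. rewrite <- E. auto. Qed.

Lemma V_lim k p : (2 <= k)%nat -> 0 <= p <= 1 -> Un_cv (fun n => V k p n 0) 0.
Proof.
  intros Hk Hp.
  assert (Hl : forall m : nat, {l | Un_cv (fun n => V k p n (- INR m)) l}).
  { intros m. apply decreasing_cv.
    - intros n. apply V_decr; auto.
    - exists 0. intros x [i ->]. unfold opp_seq. pose proof (V_bounds k p i (- INR m) Hk Hp). lra. }
  set (l := fun m => proj1_sig (Hl m)).
  assert (Hcv : forall m, Un_cv (fun n => V k p n (- INR m)) (l m)) by (intros m; exact (proj2_sig (Hl m))).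
  assert (Hb : forall m, 0 <= l m <= 1).
  { intros m. split.
    - apply Rle_cv_lim with (Un := fun _ => 0) (Vn := fun n => V k p n (- INR m)); auto using cv_const.
      intros n; apply (proj1 (V_bounds k p n (- INR m) Hk Hp)).
    - apply Rle_cv_lim with (Vn := fun _ => 1) (Un := fun n => V k p n (- INR m)); auto using cv_const.
      intros n; apply (proj2 (V_bounds k p n (- INR m) Hk Hp)). }
  assert (Hneg : forall m, leb0 (- INR m) = true).
  { intros m. unfold leb0. destruct (Rle_dec (- INR m) 0); auto. pose proof (pos_INR m). lra. }
  assert (H0 : l 0%nat = l 1%nat / 2).
  { apply (UL_sequence (fun n => V k p (S n) (- INR 0))).
    - apply (cv_shift (fun n => V k p n (- INR 0))); auto.
    - apply (cv_ext (fun n => V k p n (- INR 1) * / 2)).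
      + intros n. rewrite V_rec, Hneg by auto. rewrite V_pos with (h := - INR 0 + 1) by (auto || (simpl; lra)).
        replace (- INR 0 + -1) with (- INR 1) by (simpl; lra). lra.
      + apply CV_mult; auto using cv_const. }
  assert (HS : forall m, l (S m) = (l m + l (S (S m))) / 2).
  { intros m. apply (UL_sequence (fun n => V k p (S n) (- INR (S m)))).
    - apply (cv_shift (fun n => V k p n (- INR (S m)))); auto.
    - apply (cv_ext (fun n => (V k p n (- INR m) + V k p n (- INR (S (S m)))) * / 2)).
      + intros n. rewrite V_rec, Hneg by auto.
        replace (- INR (S m) + 1) with (- INR m) by (rewrite S_INR; lra).
        replace (- INR (S m) + -1) with (- INR (S (S m))) by (rewrite !S_INR; lra). lra.
      + apply CV_mult; auto using cv_const. apply CV_plus; auto. }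
  assert (Hlin : forall m, l m = INR (S m) * l 0%nat /\ l (S m) = INR (S (S m)) * l 0%nat).
  { induction m.
    - simpl. split; lra.
    - destruct IHm as [IH1 IH2]. split; auto.
      pose proof (HS m). rewrite !S_INR in *. lra. }
  assert (Hz : l 0%nat = 0).
  { destruct (Hb 0%nat) as [Hz1 _]. destruct Hz1 as [Hpos|]; auto.
    destruct (archimed_cor1 (l 0%nat) Hpos) as [N [HN HN0]].
    destruct (Hlin N) as [HlN _]. destruct (Hb N) as [_ HbN].
    assert (HNp : 0 < INR N) by (apply lt_0_INR; auto).
    assert (1 < INR N * l 0%nat).
    { apply Rmult_lt_compat_l with (r := INR N) in HN; auto. rewrite Rinv_r in HN; lra. }
    rewrite S_INR in HlN. pose proof (Hb 0%nat). nra. }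
  assert (Hc := Hcv 0%nat). rewrite Hz in Hc. apply (cv_ext (fun n => V k p n (- INR 0))); auto.
  intros n. simpl. rewrite Ropp_0. auto.
Qed.

Lemma Q_lim k p : (2 <= k)%nat -> 0 <= p <= 1 -> Un_cv (Qf k p) 0.
Proof.
  intros Hk Hp eps He. destruct (V_lim k p Hk Hp eps He) as [N HN]. exists N. intros n Hn.
  specialize (HN n Hn). unfold R_dist in *. rewrite Rminus_0_r in *.
  pose proof (Q_nonneg k p n Hk Hp). pose proof (Q_le_V k p n Hk Hp).
  rewrite Rabs_right in * by lra. lra.
Qed.

Theorem mainTheorem4 (k : nat) (p : R) :
  (2 <= k)%nat -> 0 <= p <= 1 ->
  exists chi : R,
    infinite_sum (chi_term k p) chi /\
    1 <= chi <= 2 /\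
    (chi = 2 <-> Un_cv (E_C_Jgt k p) 0).
Proof.
  intros Hk Hp.
  assert (Hnn : forall n, 0 <= chi_term k p n).
  { intros n. apply Rle_trans with (PJ k p n). apply PJ_nonneg; auto. apply chi_ge_PJ; auto. }
  assert (Hg : Un_growing (fun N => sum_f_R0 (chi_term k p) N)).
  { intros n. simpl. pose proof (Hnn (S n)). lra. }
  assert (Hub : forall N, sum_f_R0 (chi_term k p) N <= 2).
  { intros N. rewrite partial_chi by auto. pose proof (Q_nonneg k p N Hk Hp). pose proof (G_nonpos k p N Hk Hp). lra. }
  destruct (growing_cv _ Hg) as [chi Hchi].
  { exists 2. intros x [i ->]. apply Hub. }
  exists chi.
  assert (HQ := Q_lim k p Hk Hp).
  assert (HG : Un_cv (Gf k p) (chi - 2)).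
  { apply cv_ext with (u := fun N => sum_f_R0 (chi_term k p) N - 2 * (1 - Qf k p N)).
    - intros N. rewrite partial_chi by auto. ring.
    - replace (chi - 2) with (chi - 2 * (1 - 0)) by ring. apply CV_minus; auto.
      apply CV_mult; [apply cv_const|]. apply CV_minus; auto. apply cv_const. }
  split; [exact Hchi|]. split; [split|].
  - apply Rle_cv_lim with (Un := fun N => 1 - Qf k p N) (Vn := fun N => sum_f_R0 (chi_term k p) N); auto.
    + intros N. rewrite <- partial_PJ by auto. apply sum_Rle. intros; apply chi_ge_PJ; auto.
    + assert (Hm : Un_cv (fun N => 1 - Qf k p N) (1 - 0)) by (apply CV_minus; auto; apply cv_const).
      rewrite Rminus_0_r in Hm. exact Hm.
  - apply Rle_cv_lim with (Vn := fun N => 2) (Un := fun N => sum_f_R0 (chi_term k p) N); auto.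
    apply cv_const.
  - split.
    + intros Hc. rewrite Hc in HG. replace (2 - 2) with 0 in HG by ring.
      apply cv_ext with (u := Gf k p); auto. intros; rewrite E_C_Jgt_eq; auto.
    + intros H. assert (H' : Un_cv (Gf k p) 0) by (apply cv_ext with (u := E_C_Jgt k p); auto; intros; apply E_C_Jgt_eq).
      pose proof (UL_sequence _ _ _ HG H'). lra.
Qed.
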